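(* Let $n\in\mathbb{N}$ with $n\ge 2$, and let $\alpha:=\frac{n+\sqrt{n^2+4}}{2}$, $\gamma:=1/\alpha$, $\tau:=\log\alpha/\log n$. Then the number $\alpha-n=\frac{\sqrt{n^2+4}-n}{2}\in(0,1)$ is an isolated point of $D_{\gamma,\tau}\cap[0,1]$.
   Context: For $\gamma>0$ and $\tau\ge 1$, the Diophantine set $D_{\gamma,\tau}$ is the set of all real numbers $\xi$ such that $|\xi q-p|\ge \gamma/q^{\tau}$ for all $p\in\mathbb{Z}$ and all $q\in\mathbb{N}=\{1,2,3,\dots\}$. *)

(* Defs.v *)
From Stdlib Require Import Reals Lra Lia ZArith.
Open Scope R_scope.

Definition Diophantine (gamma tau : R) (xi : R) : Prop :=
  forall (p : Z) (q : nat), (1 <= q)%nat ->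
    Rabs (xi * INR q - IZR p) >= gamma / Rpower (INR q) tau.

Definition isolated_point (S : R -> Prop) (x : R) : Prop :=
  S x /\ exists eps : R, eps > 0 /\
    forall y : R, S y -> Rabs (y - x) < eps -> y = x.

(* Main.v *)
Require Import Defs.
From Stdlib Require Import Reals Lra Lia ZArith.
Open Scope R_scope.

Lemma ln_le' (a b : R) : 0 < a -> a <= b -> ln a <= ln b.
Proof. intros Ha Hab. destruct (Rle_lt_or_eq_dec _ _ Hab) as [H|H].
  - left; apply ln_increasing; auto.
  - subst; lra. Qed.

Lemma exp_le' (a b : R) : a <= b -> exp a <= exp b.
Proof. intros Hab. destruct (Rle_lt_or_eq_dec _ _ Hab) as [H|H].
  - left; apply exp_increasing; auto.
  - subst; lra. Qed.

Lemma key (n : nat) (x : R) (pw : nat -> R) :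
  (2 <= n)%nat -> 0 < x -> INR n * x + x * x = 1 ->
  (forall q, (1 <= q)%nat -> 1 <= pw q) ->
  (forall a b, (1 <= a)%nat -> (a <= b)%nat -> pw a <= pw b) ->
  (forall p, (1 <= p)%nat -> pw (n * p)%nat = pw p / x) ->
  forall q, (1 <= q)%nat -> forall p : Z, Rabs (x * INR q - IZR p) >= x / pw q.
Proof.
  intros Hn Hx Heq Hpw1 Hmon Hmul q.
  induction q as [q IH] using (well_founded_induction lt_wf).
  intros Hq p.
  assert (Hnr : 2 <= INR n) by (change 2 with (INR 2); apply le_INR; auto).
  assert (Hqr : 1 <= INR q) by (change 1 with (INR 1); apply le_INR; auto).
  assert (Hpq := Hpw1 q Hq).
  destruct (Z_le_gt_dec p 0) as [Hp|Hp].
  - apply IZR_le in Hp.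
    assert (x / pw q <= x).
    { unfold Rdiv. rewrite <- (Rmult_1_r x) at 2. apply Rmult_le_compat_l; [lra|].
      rewrite <- Rinv_1. apply Rinv_le_contravar; lra. }
    assert (x <= x * INR q) by nra.
    pose proof (Rle_abs (x * INR q - IZR p)). lra.
  - set (p' := Z.to_nat p).
    assert (Ep : IZR p = INR p').
    { unfold p'. rewrite INR_IZR_INZ, Z2Nat.id; auto; lia. }
    assert (Hp1 : (1 <= p')%nat) by (unfold p'; lia).
    assert (Hpr : 1 <= INR p') by (change 1 with (INR 1); apply le_INR; auto).
    rewrite Ep.
    destruct (lt_dec q (n * p')) as [Hlt|Hge].
    + assert (H1 : INR q + 1 <= INR n * INR p').
      { rewrite <- mult_INR. change 1 with (INR 1). rewrite <- plus_INR. apply le_INR. lia. }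
      assert (H2 : x * INR q <= x * (INR n * INR p' - 1)) by (apply Rmult_le_compat_l; lra).
      assert (H3 : INR p' - x * INR q >= x) by nra.
      assert (x / pw q <= x).
      { unfold Rdiv. rewrite <- (Rmult_1_r x) at 2. apply Rmult_le_compat_l; [lra|].
        rewrite <- Rinv_1. apply Rinv_le_contravar; lra. }
      pose proof (Rle_abs (- (x * INR q - INR p'))) as H4. rewrite Rabs_Ropp in H4. lra.
    + set (q' := (q - n * p')%nat).
      assert (Eq : INR q = INR q' + INR n * INR p').
      { unfold q'. assert (Hle : (n * p' <= q)%nat) by lia. rewrite (minus_INR _ _ Hle), mult_INR. ring. }
      assert (Hlt : (p' < q)%nat) by nia.
      pose proof (IH p' Hlt Hp1 (Z.of_nat q')) as IH'.
      rewrite <- INR_IZR_INZ in IH'.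
      assert (E : x * INR q - INR p' = - x * (x * INR p' - INR q')).
      { assert (Hd : x * INR q - INR p' - (- x * (x * INR p' - INR q')) = INR p' * (INR n * x + x * x - 1)) by (rewrite Eq; ring).
        rewrite Heq in Hd. lra. }
      rewrite E, Rabs_mult, Rabs_Ropp, (Rabs_pos_eq x) by lra.
      assert (Hnp1 : (1 <= n * p')%nat) by lia.
      assert (Hm := Hmon (n * p')%nat q Hnp1 ltac:(lia)).
      rewrite Hmul in Hm by auto.
      assert (Hpp := Hpw1 p' Hp1).
      assert (x * (x / pw p') >= x / pw q).
      { replace (x * (x / pw p')) with (x / (pw p' / x)) by (field; lra).
        unfold Rdiv at 1 2. apply Rle_ge, Rmult_le_compat_l; [lra|].
        apply Rinv_le_contravar; [|lra].
        unfold Rdiv; apply Rmult_lt_0_compat; [lra| apply Rinv_0_lt_compat; lra]. }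
      assert (x * Rabs (x * INR p' - INR q') >= x * (x / pw p')).
      { apply Rle_ge, Rmult_le_compat_l; lra. }
      lra.
Qed.

Theorem mainTheorem4 (n : nat) (hn : (2 <= n)%nat) :
  let alpha := (INR n + sqrt (INR n ^ 2 + 4)) / 2 in
  let gamma := / alpha in
  let tau := ln alpha / ln (INR n) in
  0 < alpha - INR n < 1 /\
  isolated_point (fun xi => Diophantine gamma tau xi /\ 0 <= xi <= 1)
                 (alpha - INR n).
Proof.
  intros alpha gamma tau.
  assert (Hnr : 2 <= INR n) by (change 2 with (INR 2); apply le_INR; auto).
  set (s := sqrt (INR n ^ 2 + 4)) in *.
  assert (Hs2 : s * s = INR n ^ 2 + 4) by (apply sqrt_sqrt; nra).
  assert (Hs0 : 0 <= s) by apply sqrt_pos.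
  assert (Hs1 : INR n < s) by nra.
  assert (Hs3 : s < INR n + 2) by nra.
  set (x := alpha - INR n).
  assert (Hx : 0 < x < 1) by (unfold x, alpha; lra).
  assert (Hxa : x * alpha = 1) by (unfold x, alpha; nra).
  assert (Hxeq : INR n * x + x * x = 1) by (unfold x in *; nra).
  assert (Ha : 1 < alpha) by (unfold alpha; lra).
  assert (Hg : gamma = x) by (unfold gamma; field_simplify_eq; [lra| lra]).
  assert (Hlnn : 0 < ln (INR n)) by (rewrite <- ln_1; apply ln_increasing; lra).
  assert (Hlna : 0 < ln alpha) by (rewrite <- ln_1; apply ln_increasing; lra).
  assert (Htau : 0 < tau) by (unfold tau, Rdiv; apply Rmult_lt_0_compat; [lra| apply Rinv_0_lt_compat; lra]).
  assert (Hpn : Rpower (INR n) tau = alpha).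
  { unfold Rpower, tau. replace (ln alpha / ln (INR n) * ln (INR n)) with (ln alpha) by (field; lra).
    apply exp_ln; lra. }
  assert (Hp1 : Rpower (INR 1) tau = 1).
  { unfold Rpower. simpl. rewrite ln_1, Rmult_0_r. apply exp_0. }
  split; [exact Hx|].
  assert (Hdio : Diophantine gamma tau x).
  { intros p q Hq. rewrite Hg.
    apply (key n x (fun q => Rpower (INR q) tau)); auto; try lra.
    - intros a Ha1. unfold Rpower. rewrite <- exp_0. apply exp_le'.
      assert (1 <= INR a) by (change 1 with (INR 1); apply le_INR; auto).
      rewrite <- ln_1. assert (0 <= ln (INR a)) by (rewrite <- ln_1; apply ln_le'; lra).
      rewrite ln_1. nra.
    - intros a b Ha1 Hab. unfold Rpower. apply exp_le'.
      assert (1 <= INR a) by (change 1 with (INR 1); apply le_INR; auto).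
      assert (INR a <= INR b) by (apply le_INR; auto).
      assert (ln (INR a) <= ln (INR b)) by (apply ln_le'; lra). nra.
    - intros p0 Hp0. assert (1 <= INR p0) by (change 1 with (INR 1); apply le_INR; auto).
      unfold Rpower. rewrite mult_INR, ln_mult by lra.
      rewrite Rmult_plus_distr_l, exp_plus.
      fold (Rpower (INR n) tau). rewrite Hpn. unfold Rdiv.
      replace (/ x) with alpha by (field_simplify_eq; lra). ring. }
  split; [split; [exact Hdio| lra]|].
  assert (Hx2 : 0 < x * x) by nra.
  exists (x * x / INR n). split.
  { unfold Rdiv; apply Rmult_lt_0_compat; [lra| apply Rinv_0_lt_compat; lra]. }
  intros y [Hy Hy01] Hyx.
  pose proof (Hy 0%Z 1%nat ltac:(lia)) as H1.
  rewrite Hp1, Hg in H1. simpl in H1. rewrite Rmult_1_r, Rminus_0_r, Rabs_pos_eq in H1 by lra.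
  pose proof (Hy 1%Z n ltac:(lia)) as H2.
  rewrite Hpn, Hg in H2.
  replace (x / alpha) with (x * x) in H2 by (field_simplify_eq; nra).
  assert (Hb : Rabs (y - x) * INR n < x * x).
  { apply (Rmult_lt_compat_r (INR n)) in Hyx; [|lra].
    unfold Rdiv in Hyx. rewrite Rmult_assoc, Rinv_l, Rmult_1_r in Hyx; lra. }
  pose proof (Rle_abs (y - x)).
  assert (y * INR n - 1 < x * x) by nra.
  destruct (Rle_dec 0 (y * INR n - 1)).
  - rewrite Rabs_pos_eq in H2 by lra. lra.
  - rewrite Rabs_left in H2 by lra. simpl in H2. nra.
Qed.
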